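(* Let $L$ be a finite field of characteristic $p$ and cardinality $q>2$, and let $f\colon L\to L$, $f(x)=x^s$, be a power permutation of $L$ (i.e. $\gcd(s,q-1)=1$) with exponent $s\equiv 1\pmod{p-1}$. Let $\ell$ be a prime. If the degree $[L:\mathbb{F}_p]$ is a power of $\ell$ and $p\not\equiv 2\pmod \ell$, then $\mathfrak{D}(f)\equiv 0\pmod \ell$.
   Context: Let $\mu$ be the canonical additive character of $L$, $\mu(x)=\exp(2i\pi\,\mathrm{Tr}(x)/p)$, where $\mathrm{Tr}$ is the trace of $L/\mathbb{F}_p$. The Fourier coefficient of $f$ at $a\in L$ is $\widehat{f}(a)=\sum_{x\in L}\mu(ax+f(x))$; under the hypothesis $s\equiv 1\pmod{p-1}$ these are rational integers. Define $\mathfrak{D}(f)=\prod_{a\in L^{\times}}\widehat{f}(a)$. *)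

(* Defs.v *)
From HB Require Import structures.
From mathcomp Require Import all_boot all_order all_algebra all_field.
Set Implicit Arguments. Unset Strict Implicit. Unset Printing Implicit Defensive.
Import Order.TTheory GRing.Theory Num.Theory.
Local Open Scope ring_scope.

Definition fdeg (L : finFieldType) (p : nat) : nat := logn p #|L|.

(* absolute trace Tr_{L/F_p}(x) = x + x^p + ... + x^(p^(n-1)), an element of
   the prime subfield of L *)
Definition ftrace (L : finFieldType) (p : nat) (x : L) : L :=
  \sum_(i < fdeg L p) x ^+ (p ^ i).

Definition trnat (L : finFieldType) (p : nat) (x : L) : nat :=
  if [pick k : 'I_p | (k%:R == ftrace p x)] is Some k then nat_of_ord k else 0%N.

(* exp(2 i pi / p) in algC: p.-root (-1) has argument pi/p *)
Definition zeta_p (p : nat) : algC := (p.-root (-1)) ^+ 2.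

Definition mu (L : finFieldType) (p : nat) (x : L) : algC :=
  zeta_p p ^+ trnat p x.

Definition fourier (L : finFieldType) (p : nat) (f : L -> L) (a : L) : algC :=
  \sum_(x : L) mu p (a * x + f x).

Definition Dfrak (L : finFieldType) (p : nat) (f : L -> L) : algC :=
  \prod_(a : L | a != 0) fourier p f a.

(* Main.v *)
From mathcomp Require Import all_boot all_order all_fingroup all_solvable.
Require Import Defs.
From mathcomp Require Import all_boot all_order all_algebra all_field.
Import GRing.Theory Num.Theory.
Local Open Scope ring_scope.
Set Implicit Arguments. Unset Strict Implicit.

Lemma card_fdeg (L : finFieldType) p : p \in [pchar L] -> #|L| = (p ^ fdeg L p)%N.
Proof. move=> pL; exact: (card_pprimeChar pL). Qed.

Lemma frob_fdeg (L : finFieldType) p (x : L) : p \in [pchar L] ->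
  x ^+ (p ^ fdeg L p) = x.
Proof. by move=> pL; rewrite -card_fdeg // expf_card. Qed.

Lemma big_shift1 (L : finFieldType) (g : nat -> L) m : g m = g 0%N ->
  \sum_(i < m) g i.+1 = \sum_(i < m) g i.
Proof.
case: m => [|m] gm; first by rewrite !big_ord0.
by rewrite big_ord_recr big_ord_recl /= gm addrC.
Qed.

Lemma ftrace_frob (L : finFieldType) p (x : L) : p \in [pchar L] ->
  ftrace p (x ^+ p) = ftrace p x.
Proof.
move=> pL; rewrite /ftrace.
rewrite (eq_bigr (fun i : 'I__ => x ^+ (p ^ i.+1))); last first.
  by move=> i _; rewrite -exprM expnS.
rewrite (@big_shift1 _ (fun i => x ^+ (p ^ i))) //. by rewrite frob_fdeg // expn0 expr1.
Qed.

Lemma ftrace_pow (L : finFieldType) p (x : L) : p \in [pchar L] ->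
  ftrace p x ^+ p = ftrace p x.
Proof.
move=> pL; rewrite -(pFrobenius_autE pL) /ftrace rmorph_sum /=.
rewrite -[RHS](ftrace_frob x pL) /ftrace.
by apply: eq_bigr => i _; rewrite pFrobenius_autE -!exprM mulnC.
Qed.

Lemma natr_inj (L : finFieldType) p (k j : nat) : p \in [pchar L] ->
  (k < p)%N -> (j < p)%N -> k%:R = j%:R :> L -> k = j.
Proof.
move=> pL.
wlog le_jk : k j / (j <= k)%N.
  move=> W kp jp E; case: (leqP j k) => h; first exact: W.
  by apply/esym/W => //; exact: ltnW.
move=> kp jp E; apply/eqP; rewrite eqn_leq le_jk andbT.
suff: (k - j == 0)%N by rewrite subn_eq0.
have: (p %| k - j)%N by rewrite (dvdn_pcharf pL) natrB // E subrr.
have : (k - j < p)%N by apply: leq_ltn_trans kp; exact: leq_subr.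
case: (k - j)%N => [//|d] dp.
by move=> H; have := dvdn_leq (ltn0Sn d) H; rewrite leqNgt dp.
Qed.

Lemma natr_mod (L : finFieldType) p (m : nat) : p \in [pchar L] ->
  (m %% p)%:R = m%:R :> L.
Proof.
by move=> pL; rewrite {2}(divn_eq m p) natrD natrM (pcharf0 pL) mulr0 add0r.
Qed.

Lemma fixed_nat (L : finFieldType) p (z : L) : p \in [pchar L] ->
  z ^+ p = z -> exists k : 'I_p, k%:R = z.
Proof.
move=> pL zp; have pr := pcharf_prime pL; have p1 := prime_gt1 pr.
set E := [set x : L | x ^+ p == x].
set I := [set (k%:R : L) | k : 'I_p].
have cI : #|I| = p.
  rewrite card_imset ?card_ord // => k j /(natr_inj pL (ltn_ord k) (ltn_ord j)).
  exact: val_inj.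
have sIE : I \subset E.
  by apply/subsetP => x /imsetP[k _ ->]; rewrite inE -(pFrobenius_autE pL) rmorph_nat.
have cE : (#|E| <= p)%N.
  have Pn0 : ('X^p - 'X : {poly L}) != 0.
    rewrite -size_poly_eq0 size_polyDl ?size_polyXn // size_polyN size_polyX ltnS //.
  have := max_poly_roots Pn0 _ (enum_uniq (mem E)).
  rewrite size_polyDl ?size_polyXn ?size_polyN ?size_polyX ?ltnS // -cardE; apply.
  apply/allP => x; rewrite mem_enum inE /root !hornerE subr_eq0 //.
have /subset_cardP/(_ sIE) eqIE : #|I| = #|E|.
  by apply/eqP; rewrite eqn_leq cI cE /= -cI subset_leq_card.
have : z \in E by rewrite inE zp.
by rewrite -eqIE => /imsetP[k _ ->]; exists k.
Qed.

Lemma trnatP (L : finFieldType) p (y : L) : p \in [pchar L] ->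
  (trnat p y < p)%N /\ (trnat p y)%:R = ftrace p y.
Proof.
move=> pL; rewrite /trnat; case: pickP => [k /eqP Hk | none]; first by split.
have [k Hk] := fixed_nat pL (ftrace_pow y pL).
by have := none k; rewrite Hk eqxx.
Qed.

Lemma trnat_eq (L : finFieldType) p (y : L) m : p \in [pchar L] ->
  m%:R = ftrace p y -> trnat p y = (m %% p)%N.
Proof.
move=> pL E; have [lt E'] := trnatP y pL.
apply: (natr_inj pL) => //; first by rewrite ltn_pmod // prime_gt0 // (pcharf_prime pL).
by rewrite natr_mod // E E'.
Qed.

Lemma fixed_pow (L : finFieldType) p (z : L) k : z ^+ p = z -> z ^+ (p ^ k) = z.
Proof.
move=> zp; elim: k => [|k IH]; first by rewrite expn0 expr1.
by rewrite expnS exprM zp IH.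
Qed.

Lemma powfix (L : finFieldType) p s (z : L) : (2 < p)%N -> s = 1 %[mod p.-1] ->
  z ^+ p = z -> z ^+ s = z.
Proof.
move=> p2 sm zp.
have sm1 : (s %% p.-1 = 1)%N by rewrite sm modn_small // -ltnS prednK // ltnW // ltnW.
have -> : s = (s %/ p.-1 * p.-1 + 1)%N by rewrite {1}(divn_eq s p.-1) sm1.
have [->|nz] := eqVneq z 0; first by rewrite expr0n addn1.
have zp1 : z ^+ p.-1 = 1.
  apply: (mulIf nz); rewrite mul1r -exprSr prednK // ltnW // ltnW //.
by rewrite exprD mulnC exprM zp1 expr1n mul1r expr1.
Qed.

Lemma ftrace_scale (L : finFieldType) p (c w : L) : c ^+ p = c ->
  ftrace p (c * w) = c * ftrace p w.
Proof.
move=> cp; rewrite /ftrace mulr_sumr; apply: eq_bigr => i _.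
by rewrite exprMn (fixed_pow _ cp).
Qed.

Lemma ftrace_fixed (L : finFieldType) p (w : L) : w ^+ p = w ->
  ftrace p w = w *+ fdeg L p.
Proof.
move=> wp; rewrite /ftrace (eq_bigr (fun _ => w)); last by move=> i _; rewrite (fixed_pow _ wp).
by rewrite sumr_const card_ord.
Qed.

Lemma zeta_pow p : (0 < p)%N -> zeta_p p ^+ p = 1.
Proof. by move=> p0; rewrite /zeta_p exprAC rootCK // sqrrN expr1n. Qed.

Lemma zeta_ne1 p : (1 < p)%N -> zeta_p p != 1.
Proof.
move=> p1; have p0 : (0 < p)%N by apply: ltnW.
rewrite /zeta_p; set r := p.-root (-1).
have rp : r ^+ p = -1 by rewrite rootCK.
apply/eqP => /eqP; rewrite -subr_eq0 subr_sqr_1 mulf_eq0 subr_eq0 addr_eq0 => /orP[] /eqP re.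
  move: rp; rewrite re expr1n => /eqP; rewrite -subr_eq0 opprK.
  by rewrite (pnatr_eq0 _ 2).
have := rootC_lt0 (-1 : algC) p1; rewrite -/r re ltrN10 //.
Qed.

Lemma sum_zeta p : (1 < p)%N -> \sum_(t < p) zeta_p p ^+ t = 0.
Proof.
move=> p1; have := subrX1 (zeta_p p) p.
rewrite zeta_pow ?subrr ?(ltnW p1) // => /esym/eqP; rewrite mulf_eq0 subr_eq0.
by rewrite (negbTE (zeta_ne1 p1)) => /eqP.
Qed.

Definition Ncnt (L : finFieldType) p s (a : L) (t : nat) : nat :=
  #|[set x : L | trnat p (a * x + x ^+ s) == t]|.

Lemma dvd_small p d : (p %| d)%N -> (d < p)%N -> d = 0%N.
Proof.
case: d => // d H; have := dvdn_leq (ltn0Sn d) H.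
by rewrite leqNgt => /negbTE ->.
Qed.

Lemma mulmod_inj p c a b : prime p -> (0 < c < p)%N -> (a < p)%N -> (b < p)%N ->
  ((c * a) %% p = (c * b) %% p)%N -> a = b.
Proof.
move=> pr /andP[c0 cp].
wlog le_ab : a b / (a <= b)%N.
  move=> W ap bp E; case: (leqP a b) => h; first exact: W.
  by apply/esym/W => //; exact: ltnW.
move=> ap bp /eqP; rewrite eq_sym eqn_mod_dvd ?leq_mul2l ?le_ab ?orbT // -mulnBr.
rewrite Gauss_dvdr; last by rewrite prime_coprime // gtnNdvd.
move=> /dvd_small; rewrite (leq_ltn_trans (leq_subr _ _) bp) => /(_ isT) /eqP.
by rewrite subn_eq0 => ba; apply/eqP; rewrite eqn_leq le_ab.
Qed.

Lemma fourier_count (L : finFieldType) p s (a : L) : p \in [pchar L] ->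
  fourier p (fun x : L => x ^+ s) a = \sum_(t < p) zeta_p p ^+ t *+ Ncnt p s a t.
Proof.
move=> pL; rewrite /fourier /mu.
rewrite (eq_bigr (fun x => \sum_(t < p) if trnat p (a * x + x ^+ s) == t
                                       then zeta_p p ^+ t else 0)); last first.
  move=> x _; have [lt _] := trnatP (a * x + x ^+ s) pL.
  rewrite (bigD1 (Ordinal lt)) //= eqxx big1 ?addr0 // => t neq.
  rewrite ifN //; apply: contra neq => /eqP e; apply/eqP/val_inj => /=; by rewrite e.
rewrite exchange_big; apply: eq_bigr => t _.
rewrite -big_mkcond /= /Ncnt -sumr_const; apply: eq_bigl => x; by rewrite inE.
Qed.

Lemma N_scale (L : finFieldType) p s (a : L) t : p \in [pchar L] -> (2 < p)%N ->
  s = 1 %[mod p.-1] -> (0 < t < p)%N -> Ncnt p s a t = Ncnt p s a 1.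
Proof.
move=> pL p2 sm /andP[t0 tp]; have pr := pcharf_prime pL.
set c : L := t%:R.
have cp : c ^+ p = c by rewrite -(pFrobenius_autE pL) rmorph_nat.
have cn0 : c != 0 by rewrite /c -(dvdn_pcharf pL) gtnNdvd.
rewrite /Ncnt -(card_preimset _ (mulfI cn0)); apply: eq_card => y; rewrite !inE.
have -> : a * (c * y) + (c * y) ^+ s = c * (a * y + y ^+ s).
  by rewrite exprMn (powfix p2 sm cp) mulrDr mulrCA.
have [lt E] := trnatP (a * y + y ^+ s) pL.
rewrite (@trnat_eq _ _ _ (t * trnat p (a * y + y ^+ s))) //; last first.
  by rewrite ftrace_scale // natrM E.
apply/eqP/eqP => [H|->]; last by rewrite muln1 modn_small.
apply: (@mulmod_inj p t _ _ pr); [by rewrite t0 | exact: lt | exact: ltnW | ].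
by rewrite H muln1 modn_small.
Qed.

Lemma fourier_int (L : finFieldType) p s (a : L) : p \in [pchar L] -> (2 < p)%N ->
  s = 1 %[mod p.-1] ->
  fourier p (fun x : L => x ^+ s) a = (Ncnt p s a 0)%:R - (Ncnt p s a 1)%:R.
Proof.
move=> pL p2 sm; have p0 : (0 < p)%N by apply: ltnW; apply: ltnW.
rewrite fourier_count //.
have S := sum_zeta (ltnW p2).
rewrite (bigD1 (Ordinal p0)) //= in S; rewrite (bigD1 (Ordinal p0)) //=.
rewrite (eq_bigr (fun t : 'I_p => zeta_p p ^+ t *+ Ncnt p s a 1)); last first.
  move=> t neq; congr (_ *+ _); apply: N_scale => //; rewrite ltn_ord andbT lt0n.
  by apply: contra neq => /eqP e; apply/eqP/val_inj.
rewrite sumrMnl.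
have -> : \sum_(i < p | i != Ordinal p0) zeta_p p ^+ i = -1.
  by apply/eqP; rewrite -addr_eq0 addrC -(expr0 (zeta_p p)) S.
by rewrite expr0 mulNrn.
Qed.

Lemma trnat_frob (L : finFieldType) p (y : L) : p \in [pchar L] ->
  trnat p (y ^+ p) = trnat p y.
Proof. by move=> pL; rewrite /trnat ftrace_frob. Qed.

Definition Cfix (L : finFieldType) p s t : nat :=
  #|[set x : L | (trnat p (1 * x + x ^+ s) == t) && (x ^+ p == x)]|.

Lemma frob_inj (L : finFieldType) p : p \in [pchar L] ->
  injective (fun x : L => x ^+ p).
Proof.
move=> pL x y /= E; apply: (fmorph_inj (pFrobenius_aut pL)).
exact: E.
Qed.

Lemma N_Cfix (L : finFieldType) p s l k t : p \in [pchar L] -> prime l ->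
  fdeg L p = (l ^ k)%N ->
  Ncnt p s (1 : L) t = Cfix L p s t %[mod l].
Proof.
move=> pL pl nk.
set phi : {perm L} := perm (frob_inj pL).
have phiE : forall x, phi x = x ^+ p by move=> x; rewrite permE.
set S := [set x : L | trnat p (1 * x + x ^+ s) == t].
have lG : pgroup l <[phi]>%g.
  rewrite /pgroup; apply: (@pnat_dvd _ (l ^ k)%N); last by rewrite pnatX pnat_id.
  rewrite order_dvdn; apply/eqP; apply/perm.permP => x; rewrite permX perm1 -nk.
  suff -> : iter (fdeg L p) phi x = x ^+ (p ^ fdeg L p) by rewrite frob_fdeg.
  elim: (fdeg L p) => [|m IH]; first by rewrite expn0 expr1.
  by rewrite iterS IH phiE -exprM expnSr.
have aS : [acts <[phi]>%g, on S | 'P].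
  rewrite cycle_subG; apply/astabsP => x; rewrite /= apermE phiE !inE !mul1r exprAC.
  have -> : x ^+ p + (x ^+ s) ^+ p = (x + x ^+ s) ^+ p.
    by rewrite -!(pFrobenius_autE pL) rmorphD.
  by rewrite trnat_frob.
have := pgroup_fix_mod lG aS.
rewrite /Ncnt /Cfix -/S => ->; congr (_ %% _)%N.
apply: eq_card => x; rewrite in_setI afix_cycle inE.
congr (_ && _); first by rewrite inE.
apply/afix1P/eqP; by rewrite /= apermE phiE.
Qed.

Lemma natr_frob (L : finFieldType) p (m : nat) : p \in [pchar L] ->
  (m%:R : L) ^+ p = m%:R.
Proof. by move=> pL; rewrite -(pFrobenius_autE pL) rmorph_nat. Qed.

Lemma Tfix (L : finFieldType) p s (k : nat) : p \in [pchar L] -> (2 < p)%N ->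
  s = 1 %[mod p.-1] ->
  trnat p (1 * (k%:R : L) + (k%:R) ^+ s) = ((fdeg L p * (k + k)) %% p)%N.
Proof.
move=> pL p2 sm.
have kp : (k%:R : L) ^+ p = k%:R by rewrite -(pFrobenius_autE pL) rmorph_nat.
rewrite mul1r (powfix p2 sm kp) -natrD; apply: trnat_eq => //.
rewrite ftrace_fixed; last by rewrite -(pFrobenius_autE pL) rmorph_nat.
by rewrite mulnC natrM mulr_natr.
Qed.

Lemma Cfix_card (L : finFieldType) p s t : p \in [pchar L] -> (2 < p)%N ->
  s = 1 %[mod p.-1] ->
  Cfix L p s t = #|[set k : 'I_p | ((fdeg L p * (k + k)) %% p == t)%N]|.
Proof.
move=> pL p2 sm; rewrite /Cfix.
have -> : [set x : L | (trnat p (1 * x + x ^+ s) == t) && (x ^+ p == x)] =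
    (fun k : 'I_p => (k%:R : L)) @: [set k : 'I_p | ((fdeg L p * (k + k)) %% p == t)%N].
  apply/setP => x; rewrite inE; apply/andP/imsetP.
    case => /eqP Ht /eqP xp; have [k kx] := fixed_nat pL xp.
    exists k => //; rewrite inE; move: Ht; rewrite -kx Tfix // => ->.
    by [].
  case => k; rewrite inE => /eqP hk ->; split; first by rewrite Tfix // hk.
  by rewrite natr_frob.
apply: card_imset => a b /(natr_inj pL (ltn_ord a) (ltn_ord b)).
exact: val_inj.
Qed.

Lemma Cfix_cong (L : finFieldType) p s l k : p \in [pchar L] -> (2 < p)%N ->
  s = 1 %[mod p.-1] -> prime l -> fdeg L p = (l ^ k)%N ->
  (Cfix L p s 0 %% l = Cfix L p s 1 %% l)%N.
Proof.
move=> pL p2 sm pl nk; have pr := pcharf_prime pL.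
have p0 : (0 < p)%N by apply: ltnW; apply: ltnW.
rewrite !Cfix_card //; set n := fdeg L p.
have nkk : forall j : nat, (n * (j + j) = n * 2 * j)%N.
  by move=> j; rewrite addnn -mul2n mulnA.
case: (boolP (p %| n * 2)%N) => [dv | ndv].
  have h0 : forall j : 'I_p, ((n * (j + j)) %% p = 0)%N.
    by move=> j; apply/eqP; rewrite nkk -/(dvdn p _) dvdn_mulr.
  have -> : [set j : 'I_p | ((n * (j + j)) %% p == 0)%N] = setT.
    by apply/setP => j; rewrite !inE h0.
  have -> : [set j : 'I_p | ((n * (j + j)) %% p == 1)%N] = set0.
    by apply/setP => j; rewrite !inE h0.
  rewrite cardsT cards0 card_ord mod0n.
  have : (p %| n)%N.
    by rewrite -(@Gauss_dvdl p n 2) // prime_coprime // gtnNdvd.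
  rewrite /n nk Euclid_dvdX // => /andP[]; rewrite dvdn_prime2 // => /eqP -> _.
  by rewrite modnn.
set c := ((n * 2) %% p)%N.
have cpos : (0 < c < p)%N.
  by rewrite ltn_pmod // andbT lt0n; exact: contra ndv.
have hlt : forall j : 'I_p, ((n * (j + j)) %% p < p)%N by move=> j; rewrite ltn_pmod.
pose hk (j : 'I_p) : 'I_p := Ordinal (hlt j).
have hinj : injective hk.
  move=> a b /(congr1 val) /=; rewrite !nkk -!(modnMml (n * 2)) -/c => E.
  by apply: val_inj; apply: (mulmod_inj pr cpos (ltn_ord a) (ltn_ord b) E).
have one : forall t (tp : (t < p)%N),
    #|[set j : 'I_p | ((n * (j + j)) %% p == t)%N]| = 1%N.
  move=> t tp; rewrite -(cards1 (Ordinal tp)) -(card_preimset [set Ordinal tp] hinj).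
  by apply: eq_card => j; rewrite !inE -(inj_eq val_inj).
by rewrite (one 0%N p0) (one 1%N (ltnW p2)).
Qed.
Unset Implicit Arguments. Set Strict Implicit.
Theorem mainTheorem4 (L : finFieldType) (p : nat) (s : nat) (l : nat) :
  p \in [pchar L] ->
  (2 < #|L|)%N ->
  coprime s #|L|.-1 ->
  s = 1 %[mod p.-1] ->
  prime l ->
  (exists k : nat, fdeg L p = (l ^ k)%N) ->
  p != 2 %[mod l] ->
  exists z : int, Dfrak p (fun x : L => x ^+ s) = z%:~R /\ ((l%:Z) %| z)%Z.
Proof.
move=> pL _ _ sm pl [k nk] p2l.
have pr := pcharf_prime pL.
have p2 : (2 < p)%N.
  rewrite ltn_neqAle prime_gt1 // andbT; apply: contra p2l => /eqP <- //.
pose F (a : L) : int := (Ncnt p s a 0)%:Z - (Ncnt p s a 1)%:Z.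
exists (\prod_(a : L | a != 0) F a); split.
  rewrite /Dfrak rmorph_prod; apply: eq_bigr => a _.
  by rewrite fourier_int // /F rmorphB.
rewrite (bigD1 1) ?oner_eq0 //=; apply: dvdz_mulr.
rewrite /F -eqz_mod_dvd !modz_nat eqz_nat.
rewrite (N_Cfix s 0 pL pl nk) (N_Cfix s 1 pL pl nk).
by rewrite (Cfix_cong pL p2 sm pl nk).
Qed.
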